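(* Let $P_1,P_2,N>0$. If $\sigma_1^2\ge P_1\big(\frac32+\frac{P_2}{N}\big)$ and $\sigma_2^2\ge P_2\big(\frac32+\frac{P_1}{N}\big)$, then $\mathcal R_{\mathrm{Wil}}(P_1,P_2,N,\sigma_1^2,\sigma_2^2)=\mathcal C_{\mathrm{MAC}}(P_1,P_2,N)$.
   Context: For $x\in[0,1]$, $\bar x=1-x$. The region $\mathcal R_{\mathrm{Wil}}(P_1,P_2,N,\sigma_1^2,\sigma_2^2)$ (for $\sigma_1^2,\sigma_2^2\ge0$) is the set of pairs $(R_1,R_2)$ for which there exist nonnegative $R_{1,0},R_{1,1}$ with $R_{1,0}+R_{1,1}=R_1$, nonnegative $R_{2,0},R_{2,2}$ with $R_{2,0}+R_{2,2}=R_2$, and $\delta_1,\delta_2,\rho_1,\rho_2\in[0,1]$ such that $R_{1,1}\le\frac12\log(1+\frac{\delta_1P_1}{N})$; $R_{1,0}\le\frac12\log\big(1+\frac{\bar\delta_1P_1(1-\rho_1^2)}{\delta_1P_1+N+\sigma_2^2}\big)$; $R_{2,0}\le\frac12\log\big(1+\frac{\bar\delta_2P_2(1-\rho_2^2)}{\delta_2P_2+N+\sigma_1^2}\big)$; $R_{2,2}\le\frac12\log(1+\frac{\delta_2P_2}{N})$; $R_{1,1}+R_{2,2}\le\frac12\log(1+\frac{\delta_1P_1+\delta_2P_2}{N})$; $R_1+R_2\le\frac12\log\big(1+\frac{P_1+P_2+2\sqrt{\bar\delta_1\bar\delta_2P_1P_2}\rho_1\rho_2}{N}\big)$. The no-feedback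 capacity region $\mathcal C_{\mathrm{MAC}}(P_1,P_2,N)$ is the set of nonnegative $(R_1,R_2)$ with $R_1\le\frac12\log(1+\frac{P_1}{N})$, $R_2\le\frac12\log(1+\frac{P_2}{N})$, $R_1+R_2\le\frac12\log(1+\frac{P_1+P_2}{N})$. *)

(* Defs.v *)
From Stdlib Require Import Reals.
Open Scope R_scope.

(* (1/2) log(1+x); natural logarithm (the base only rescales all rates uniformly). *)
Definition C (x : R) : R := / 2 * ln (1 + x).

Definition in01 (x : R) : Prop := 0 <= x <= 1.

(* The region R_Wil(P1,P2,N,s1,s2), where s1 = sigma_1^2, s2 = sigma_2^2. *)
Definition R_Wil (P1 P2 N s1 s2 : R) (R1 R2 : R) : Prop :=
  exists R10 R11 R20 R22 d1 d2 r1 r2 : R,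
    0 <= R10 /\ 0 <= R11 /\ R10 + R11 = R1 /\
    0 <= R20 /\ 0 <= R22 /\ R20 + R22 = R2 /\
    in01 d1 /\ in01 d2 /\ in01 r1 /\ in01 r2 /\
    R11 <= C (d1 * P1 / N) /\
    R10 <= C ((1 - d1) * P1 * (1 - r1 ^ 2) / (d1 * P1 + N + s2)) /\
    R20 <= C ((1 - d2) * P2 * (1 - r2 ^ 2) / (d2 * P2 + N + s1)) /\
    R22 <= C (d2 * P2 / N) /\
    R11 + R22 <= C ((d1 * P1 + d2 * P2) / N) /\
    R1 + R2 <= C ((P1 + P2 + 2 * sqrt ((1 - d1) * (1 - d2) * P1 * P2) * r1 * r2) / N).

Definition C_MAC (P1 P2 N : R) (R1 R2 : R) : Prop :=
  0 <= R1 /\ 0 <= R2 /\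
  R1 <= C (P1 / N) /\ R2 <= C (P2 / N) /\ R1 + R2 <= C ((P1 + P2) / N).

(* Main.v *)
From Pilot Require Import Defs.
From Stdlib Require Import Reals Lra Psatz.
Open Scope R_scope.
Local Notation C := Pilot.Defs.C.

Lemma ln_le x y : 0 < x -> x <= y -> ln x <= ln y.
Proof. intros. destruct H0. left; apply ln_increasing; auto. subst; lra. Qed.

Lemma C0 : C 0 = 0.
Proof. unfold C. rewrite Rplus_0_r, ln_1. ring. Qed.

Lemma C_mono u v : 0 <= u -> u <= v -> C u <= C v.
Proof. intros. unfold C. apply Rmult_le_compat_l; [lra|]. apply ln_le; lra. Qed.

Lemma C_sum2 u v t : 0 <= u -> 0 <= v -> (1+u)*(1+v) <= 1+t -> C u + C v <= C t.
Proof.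
  intros. unfold C. rewrite <- Rmult_plus_distr_l, <- ln_mult by lra.
  apply Rmult_le_compat_l; [lra|]. apply ln_le; [nra|lra].
Qed.

Lemma C_sum3 u v w t : 0 <= u -> 0 <= v -> 0 <= w -> (1+u)*(1+v)*(1+w) <= 1+t ->
  C u + C v + C w <= C t.
Proof.
  intros. assert (0 < (1+u)*(1+v)) by nra. assert (0 < (1+u)*(1+v)*(1+w)) by nra.
  unfold C. rewrite <- !Rmult_plus_distr_l, <- ln_mult, <- ln_mult by lra.
  apply Rmult_le_compat_l; [lra|]. apply ln_le; lra.
Qed.

Lemma key1 a x q N s : 0 < N -> 0 <= a -> 0 <= q -> 0 <= s -> q*(a+N+s) <= x ->
  (1+q)*(1+a/N) <= 1 + (a+x)/N.
Proof.
  intros.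
  replace ((1+q)*(1+a/N)) with ((N + a + q*(N+a)) * / N) by (field; lra).
  replace (1 + (a+x)/N) with ((N+a+x) * / N) by (field; lra).
  apply Rmult_le_compat_r. left; apply Rinv_0_lt_compat; lra. nra.
Qed.

Lemma key2 a x b y N s1 s2 q1 q2 : 0 < N -> 0 <= a -> 0 <= x -> 0 <= b -> 0 <= y ->
  0 <= q1 -> 0 <= q2 ->
  s1 >= (a+x)*(3/2 + (b+y)/N) -> s2 >= (b+y)*(3/2+(a+x)/N) ->
  q1*(a+N+s2) <= x -> q2*(b+N+s1) <= y ->
  (1+(a+b)/N)*(1+q1)*(1+q2) <= 1 + ((a+x)+(b+y))/N.
Proof.
  intros HN Ha Hx Hb Hy Hq1 Hq2 Hs1 Hs2 H1 H2.
  assert (E1 : s1 * N >= (a+x)*(3/2*N + (b+y))).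
  { replace ((a+x)*(3/2*N + (b+y))) with ((a+x)*(3/2 + (b+y)/N) * N) by (field; lra). nra. }
  assert (E2 : s2 * N >= (b+y)*(3/2*N + (a+x))).
  { replace ((b+y)*(3/2*N + (a+x))) with ((b+y)*(3/2 + (a+x)/N) * N) by (field; lra). nra. }
  remember (a+x) as P1 eqn:EP1. remember (b+y) as P2 eqn:EP2.
  assert (Hs1p : 0 <= s1) by nra. assert (Hs2p : 0 <= s2) by nra.
  remember (a+N+s2) as D1 eqn:ED1. remember (b+N+s1) as D2 eqn:ED2.
  assert (HD1 : 0 < D1) by (lra). assert (HD2 : 0 < D2) by (lra).
  assert (F1 : N*(s2-b) >= y*(N/2+P1)) by (nra).
  assert (F2 : N*(s1-a) >= x*(N/2+P2)) by (nra).
  assert (G1 : D2 >= N + P1) by (nra).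
  assert (G2 : D1 >= N + P2) by (nra).
  assert (Hsb : s2 - b >= 0) by nra.
  assert (Hsa : s1 - a >= 0) by nra.
  assert (K1 : N*(x*D2*(s2-b)) >= x*y*(N+P1)*(N/2+P1)).
  { assert (x*D2*(N*(s2-b)) >= x*D2*(y*(N/2+P1))).
    { apply Rle_ge, Rmult_le_compat_l; [nra|lra]. }
    assert (x*D2*(y*(N/2+P1)) >= x*(N+P1)*(y*(N/2+P1))).
    { apply Rle_ge. apply Rmult_le_compat_r. nra.
      apply Rmult_le_compat_l; lra. }
    nra. }
  assert (K2 : N*(y*D1*(s1-a)) >= x*y*(N+P2)*(N/2+P2)).
  { assert (y*D1*(N*(s1-a)) >= y*D1*(x*(N/2+P2))).
    { apply Rle_ge, Rmult_le_compat_l; [nra|lra]. }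
    assert (y*D1*(x*(N/2+P2)) >= y*(N+P2)*(x*(N/2+P2))).
    { apply Rle_ge. apply Rmult_le_compat_r. nra.
      apply Rmult_le_compat_l; lra. }
    nra. }
  assert (Kxy : 0 <= x*y) by nra.
  assert (K : x*D2*(s2-b) + y*D1*(s1-a) >= (N+a+b)*(x*y)).
  { assert (N*(x*D2*(s2-b) + y*D1*(s1-a)) >= N*((N+a+b)*(x*y))).
    { assert ((N+P1)*(N/2+P1) + (N+P2)*(N/2+P2) >= N*(N+a+b)) by (nra).
      nra. }
    nra. }
  assert (M : (N+a+b)*(1+q1)*(1+q2) <= N+a+b+x+y).
  { assert (A : (N+a+b)*(D1+q1*D1)*(D2+q2*D2) <= (N+a+b)*(D1+x)*(D2+y)).
    { assert (0 <= q1*D1) by nra. assert (0 <= q2*D2) by nra.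
      apply Rmult_le_compat; try lra.
      - apply Rmult_le_pos; lra.
      - apply Rmult_le_compat_l; lra. }
    assert (B : (N+a+b)*(D1+x)*(D2+y) <= (N+a+b+x+y)*(D1*D2)).
    { assert (Id : (N+a+b+x+y)*(D1*D2) - (N+a+b)*(D1+x)*(D2+y) =
         x*D2*(s2-b) + y*D1*(s1-a) - (N+a+b)*(x*y)) by (subst; ring).
      lra. }
    assert (Eq : (N+a+b)*(D1+q1*D1)*(D2+q2*D2) = ((N+a+b)*(1+q1)*(1+q2))*(D1*D2)) by ring.
    apply (Rmult_le_reg_r (D1*D2)); nra. }
  replace ((1+(a+b)/N)*(1+q1)*(1+q2)) with (((N+a+b)*(1+q1)*(1+q2)) * /N) by (field; lra).
  replace (1 + (P1+P2)/N) with ((N+a+b+x+y) * /N) by (subst; field; lra).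
  apply Rmult_le_compat_r. left; apply Rinv_0_lt_compat; lra. lra.
Qed.

Lemma quot_bound d P r D : 0 < D -> 0 <= P -> 0 <= d <= 1 -> 0 <= r <= 1 ->
  0 <= (1-d)*P*(1-r^2)/D /\ (1-d)*P*(1-r^2)/D * D <= (1-d)*P.
Proof.
  intros HD HP [d0 d1] [r0 r1]. assert (0 <= 1 - r^2) by (simpl; nra).
  assert (1 - r^2 <= 1) by (simpl; nra). split.
  - unfold Rdiv. apply Rmult_le_pos; [apply Rmult_le_pos; [apply Rmult_le_pos|]; lra|]. left; apply Rinv_0_lt_compat; lra.
  - replace ((1-d)*P*(1-r^2)/D * D) with ((1-d)*P*(1-r^2)) by (field; lra).
    assert (0 <= (1-d)*P) by nra. rewrite <- (Rmult_1_r ((1-d)*P)) at 2.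
    apply Rmult_le_compat_l; lra.
Qed.

Theorem mainTheorem14 (P1 P2 N s1 s2 : R) :
  0 < P1 -> 0 < P2 -> 0 < N ->
  0 <= s1 -> 0 <= s2 ->
  s1 >= P1 * (3 / 2 + P2 / N) ->
  s2 >= P2 * (3 / 2 + P1 / N) ->
  forall R1 R2 : R, R_Wil P1 P2 N s1 s2 R1 R2 <-> C_MAC P1 P2 N R1 R2.
Proof.
  intros HP1 HP2 HN Hs1 Hs2 H1 H2 R1 R2. split.
  - intros (R10 & R11 & R20 & R22 & d1 & d2 & r1 & r2 & h1 & h2 & h3 & h4 & h5 & h6 &
            i1 & i2 & i3 & i4 & b1 & b2 & b3 & b4 & b5 & b6).
    unfold in01 in *.
    destruct (quot_bound d1 P1 r1 (d1*P1+N+s2)) as [q1p q1b]; try lra; try nra.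
    destruct (quot_bound d2 P2 r2 (d2*P2+N+s1)) as [q2p q2b]; try lra; try nra.
    set (q1 := (1-d1)*P1*(1-r1^2)/(d1*P1+N+s2)) in *.
    set (q2 := (1-d2)*P2*(1-r2^2)/(d2*P2+N+s1)) in *.
    assert (Ha : 0 <= d1*P1 / N) by (unfold Rdiv; apply Rmult_le_pos; [nra|left; apply Rinv_0_lt_compat; lra]).
    assert (Hb : 0 <= d2*P2 / N) by (unfold Rdiv; apply Rmult_le_pos; [nra|left; apply Rinv_0_lt_compat; lra]).
    assert (Hab : 0 <= (d1*P1+d2*P2) / N) by (unfold Rdiv; apply Rmult_le_pos; [nra|left; apply Rinv_0_lt_compat; lra]).
    unfold C_MAC. split; [lra|]. split; [lra|]. split; [|split].
    + assert (C q1 + C (d1*P1/N) <= C (P1/N)).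
      { apply C_sum2; try lra.
        replace (P1/N) with ((d1*P1 + (1-d1)*P1)/N) by (field; lra).
        apply (key1 _ _ _ _ s2); nra. }
      lra.
    + assert (C q2 + C (d2*P2/N) <= C (P2/N)).
      { apply C_sum2; try lra.
        replace (P2/N) with ((d2*P2 + (1-d2)*P2)/N) by (field; lra).
        apply (key1 _ _ _ _ s1); nra. }
      lra.
    + assert (C ((d1*P1+d2*P2)/N) + C q1 + C q2 <= C ((P1+P2)/N)).
      { apply C_sum3; try lra.
        replace ((P1+P2)/N) with (((d1*P1 + (1-d1)*P1) + (d2*P2 + (1-d2)*P2))/N) by (field; lra).
        apply (key2 _ _ _ _ _ s1 s2); try nra. }
      lra.
  - intros (h1 & h2 & h3 & h4 & h5).
    exists 0, R1, 0, R2, 1, 1, 0, 0.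
    unfold in01.
    replace ((1-1)*P1*(1-0^2)/(1*P1+N+s2)) with 0 by (field; lra).
    replace ((1-1)*P2*(1-0^2)/(1*P2+N+s1)) with 0 by (field; lra).
    rewrite C0.
    replace (1*P1/N) with (P1/N) by (field; lra).
    replace (1*P2/N) with (P2/N) by (field; lra).
    replace ((1*P1+1*P2)/N) with ((P1+P2)/N) by (field; lra).
    replace ((P1 + P2 + 2 * sqrt ((1 - 1) * (1 - 1) * P1 * P2) * 0 * 0) / N) with ((P1+P2)/N) by (field; lra).
    repeat split; lra.
Qed.
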